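(* Let $l,t,s,n$ be integers with $t\geq l$, $s\geq l+1\geq 3$ and $n\geq 2\binom{3s}{2}$. Then for every integer $x$ with $1\leq x\leq l-1$, $$ex(n,\{K_{l,t},M_{s+1}\},l-1)\geq ex(n,\{K_{l,t},M_{s+1}\},x).$$
   Context: All graphs are finite and simple. $K_{l,t}$ is the complete bipartite graph with parts of sizes $l,t$; $M_{s+1}$ is the matching of $s+1$ disjoint edges; a graph is $\{K_{l,t},M_{s+1}\}$-free if it contains neither as a subgraph. For a graph $G$ with matching number at most $s$, say $X\subseteq V(G)$ is admissible if $|X|+\sum_{i=1}^m\lfloor |V(C_i)|/2\rfloor\leq s$, where $C_1,\dots,C_m$ are the components of $G-X$ (such $X$ exists by the Tutte–Berge formula); let $x(G)$ be the maximum size of an admissible set. Let $\mathscr{G}_x$ be the set of $\{K_{l,t},M_{s+1}\}$-free graphs $G$ on $n$ vertices with $x(G)=x$, and $ex(n,\{K_{l,t},M_{s+1}\},x)=\max_{G\in\mathscr{G}_x}e(G)$. *)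

(* Defs.v *)
From mathcomp Require Import all_boot.
Set Implicit Arguments. Unset Strict Implicit. Unset Printing Implicit Defensive.

(* A graph on the vertex set 'I_n is given by its edge set: a set of
   2-element subsets of 'I_n (see [is_simple]). *)
Definition graph (n : nat) := {set {set 'I_n}}.

Definition is_simple n (E : graph n) : bool := [forall e in E, #|e| == 2].

Definition adj n (E : graph n) (u v : 'I_n) : bool := [set u; v] \in E.

Definition nedges n (E : graph n) : nat := #|E|.

Definition contains_Klt n (E : graph n) (l t : nat) : bool :=
  [exists A : {set 'I_n}, exists B : {set 'I_n},
     [&& #|A| == l, #|B| == t, [disjoint A & B] &
         [forall a in A, forall b in B, adj E a b]]].

Definition contains_matching n (E : graph n) (k : nat) : bool :=
  [exists g : {ffun 'I_k * bool -> 'I_n},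
     injectiveb g && [forall i : 'I_k, adj E (g (i, false)) (g (i, true))]].

Definition KM_free n (E : graph n) (l t s : nat) : bool :=
  ~~ contains_Klt E l t && ~~ contains_matching E s.+1.

Definition restr n (E : graph n) (X : {set 'I_n}) : rel 'I_n :=
  fun u v => [&& adj E u v, u \notin X & v \notin X].

Definition comps n (E : graph n) (X : {set 'I_n}) : {set {set 'I_n}} :=
  [set [set y | connect (restr E X) x y] | x in ~: X].

Definition admissible n (E : graph n) (s : nat) (X : {set 'I_n}) : bool :=
  #|X| + \sum_(C in comps E X) #|C|./2 <= s.

Definition has_x n (E : graph n) (s x : nat) : bool :=
  [exists X : {set 'I_n}, admissible E s X && (#|X| == x)] &&
  [forall X : {set 'I_n}, admissible E s X ==> (#|X| <= x)].

Definition in_Gx n (l t s x : nat) (E : graph n) : bool :=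
  [&& is_simple E, KM_free E l t s & has_x E s x].

Definition ex_x (n l t s x : nat) : nat :=
  \max_(E : graph n | in_Gx l t s x E) nedges E.

(* Main.v *)
Require Import Defs.
From mathcomp Require Import all_boot zify.
Set Implicit Arguments. Unset Strict Implicit. Unset Printing Implicit Defensive.

Lemma card_bigcup_le (I T : finType) (A : {pred I}) (F : I -> {set T}) :
  #|\bigcup_(i in A) F i| <= \sum_(i in A) #|F i|.
Proof.
apply: (big_ind2 (fun (y : {set T}) (x : nat) => #|y| <= x)).
- by rewrite cards0.
- move=> y1 x1 y2 x2 h1 h2; rewrite cardsU.
  apply: leq_trans (leq_subr _ _) _; exact: leq_add.
- by [].
Qed.

Definition D2 n (B : {set 'I_n}) := [set e : {set 'I_n} | e \subset B & #|e| == 2].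

Lemma edge_bound n (E : graph n) (X : {set 'I_n}) : is_simple E ->
  #|E| <= ('C(n,2) - 'C(n - #|X|, 2)) + \sum_(C in comps E X) 'C(#|C|, 2).
Proof.
move=> hs.
have sub: E \subset (D2 setT :\: D2 (~: X)) :|: \bigcup_(C in comps E X) D2 C.
  apply/subsetP=> e eE. have /cards2P [u [v [ne he]]] := forall_inP hs e eE.
  rewrite !inE. case: (boolP (e \subset ~: X)) => hsub.
  - apply/orP; right; apply/bigcupP.
    have hu : u \in ~: X by apply: (subsetP hsub); rewrite he !inE eqxx.
    have hv : v \in ~: X by apply: (subsetP hsub); rewrite he !inE eqxx orbT.
    exists [set y | connect (restr E X) u y]; first by apply: imset_f.
    rewrite inE (forall_inP hs e eE) andbT he; apply/subsetP=> w; rewrite !inE.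
    case/orP=> /eqP ->; first exact: connect0.
    apply: connect1. rewrite /restr /adj -he eE. rewrite !inE in hu hv. by rewrite hu hv.
  - apply/orP; left. rewrite (forall_inP hs e eE) subsetT /=. by [].

apply: leq_trans (subset_leq_card sub) _.
rewrite cardsU; apply: leq_trans (leq_subr _ _) _.
apply: leq_add.
  rewrite cardsDS; last first.
    apply/subsetP=> e; rewrite !inE => /andP [_ ->]; by rewrite subsetT.
  rewrite /D2 !cards_draws cardsT card_ord.
  have hX : #|~: X| = n - #|X| by have := cardsC X; rewrite card_ord; lia.
  by rewrite hX.
apply: leq_trans (card_bigcup_le _ _) _.
by apply: leq_sum => C _; rewrite cards_draws.
Qed.



Lemma card_range_k n lo k : lo + k <= n ->
  #|[set w : 'I_n | lo <= w < lo + k]| = k.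
Proof.
elim: k => [|k IH] h.
  apply/eqP; rewrite cards_eq0; apply/eqP/setP=> w; rewrite !inE; lia.
have hw : lo + k < n by lia.
rewrite (cardsD1 (Ordinal hw)).
have E : [set w : 'I_n | lo <= w < lo + k.+1] :\ Ordinal hw = [set w : 'I_n | lo <= w < lo + k].
  apply/setP=> w; rewrite !inE.
  case: (eqVneq w (Ordinal hw)) => [->|ne] /=; first by lia.
  have : nat_of_ord w != lo + k by apply: contra ne => /eqP e; apply/eqP/val_inj.
  lia.
rewrite E IH; last by lia.
rewrite inE /=. lia.
Qed.

Lemma card_range n lo hi : lo <= hi -> hi <= n ->
  #|[set w : 'I_n | lo <= w < hi]| = hi - lo.
Proof.
move=> h1 h2. have := @card_range_k n lo (hi - lo).
have -> : lo + (hi - lo) = hi by lia. by apply; lia.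
Qed.


Definition Pe (a m u v : nat) : bool :=
  [|| (u < a) && ((v < a) || (a + 3*m <= v)),
      (v < a) && ((u < a) || (a + 3*m <= u)) |
      [&& a <= u, u < a + 3*m, a <= v, v < a + 3*m & (u - a) %/ 3 == (v - a) %/ 3]].

Lemma Pe_sym a m u v : Pe a m u v = Pe a m v u.
Proof. rewrite /Pe; apply/idP/idP; lia. Qed.

Definition Gp n a m : graph n :=
  [set e : {set 'I_n} | [exists u : 'I_n, exists v : 'I_n,
     [&& u != v, Pe a m u v & e == [set u; v]]]].

Lemma set2_inv (T : finType) (u v u' v' : T) :
  [set u; v] = [set u'; v'] -> (u = u' /\ v = v') \/ (u = v' /\ v = u').
Proof.
move=> H.
have hu : u \in [set u'; v'] by rewrite -H !inE eqxx.
have hv : v \in [set u'; v'] by rewrite -H !inE eqxx orbT.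
have hu' : u' \in [set u; v] by rewrite H !inE eqxx.
have hv' : v' \in [set u; v] by rewrite H !inE eqxx orbT.
rewrite !inE in hu hv hu' hv'.
case/orP: hu => /eqP eu; case/orP: hv => /eqP ev; subst; auto;
case/orP: hu' => /eqP e1; case/orP: hv' => /eqP e2; subst; auto.
Qed.

Lemma adjGp n a m (u v : 'I_n) : adj (Gp n a m) u v = (u != v) && Pe a m u v.
Proof.
rewrite /adj inE; apply/existsP/idP.
- case=> u' /existsP [v' /and3P [ne P /eqP H]].
  case: (set2_inv H) => [[-> ->]|[-> ->]]; first by rewrite ne P.
  by rewrite eq_sym ne Pe_sym.
- move/andP=> [ne P]; exists u; apply/existsP; exists v; by rewrite ne P eqxx.
Qed.

Lemma simpleGp n a m : is_simple (Gp n a m).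
Proof.
apply/forall_inP=> e; rewrite inE => /existsP [u /existsP [v /and3P [ne _ /eqP ->]]].
by rewrite cards2 ne.
Qed.

Definition Kset n a : {set 'I_n} := [set w : 'I_n | w < a].
Definition Tj n a (j : nat) : {set 'I_n} := [set w : 'I_n | a + 3*j <= w < a + 3*j + 3].
Definition inTr a m (w : nat) := (a <= w) && (w < a + 3*m).
Definition tr a (w : nat) := (w - a) %/ 3.
Definition Sv n a m (X : {set 'I_n}) (v : 'I_n) : {set 'I_n} :=
  (if inTr a m v then Tj n a (tr a v) else [set v]) :\: X.

Lemma notK n a (X : {set 'I_n}) y : Kset n a \subset X -> y \notin X -> ~~ (y < a).
Proof. move=> hK hy; apply: contra hy => h; apply: (subsetP hK); by rewrite inE. Qed.

Lemma classE n a m (X : {set 'I_n}) v : Kset n a \subset X -> v \notin X ->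
  [set y | connect (restr (Gp n a m) X) v y] = Sv a m X v.
Proof.
move=> hK hv; apply/setP => w; rewrite inE.
have hvK := notK hK hv.
apply/idP/idP.
- move=> hc.
  have cl : closed (restr (Gp n a m) X) (mem (Sv a m X v)).
    move=> y z /and3P [hadj hy hz]. rewrite adjGp in hadj.
    have hyK := notK hK hy. have hzK := notK hK hz.
    rewrite /Sv !inE hy hz /=. case: ifP => hT; rewrite !inE /inTr /tr in hT *.
    + move: hadj; rewrite /Pe. lia.
    + rewrite -!val_eqE /=. move: hadj; rewrite /Pe. lia.
  rewrite -(closed_connect cl hc) /Sv !inE hv /=; case: ifP => hT; rewrite !inE //.
  rewrite /inTr /tr in hT *; lia.
- rewrite /Sv !inE => /andP [hw]. case: (eqVneq v w) => [-> _|ne]; first exact: connect0.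
  case: ifP => hT; rewrite !inE; last by rewrite eq_sym (negbTE ne).
  move=> hwT; apply: connect1. rewrite /restr adjGp ne hv hw /= /Pe.
  rewrite /inTr /tr in hT hwT; lia.
Qed.


Lemma sum_sub (T : finType) (A B : {set T}) (F : T -> nat) :
  A \subset B -> \sum_(i in A) F i <= \sum_(i in B) F i.
Proof.
move=> h; rewrite [X in _ <= X](big_setID A) /= (setIidPr h); exact: leq_addr.
Qed.

Lemma half0 c : c <= 1 -> c./2 <= 0. Proof. lia. Qed.
Lemma half1 c : c <= 3 -> c./2 <= 1. Proof. lia. Qed.

Lemma card_K n a : a <= n -> #|Kset n a| = a.
Proof.
move=> h; have -> : Kset n a = [set w : 'I_n | 0 <= w < a] by apply/setP=> w; rewrite !inE.
by rewrite card_range // subn0.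
Qed.

Lemma card_Tj n a j : a + 3*j + 3 <= n -> #|Tj n a j| = 3.
Proof. move=> h; rewrite /Tj card_range //; lia. Qed.

Lemma sum_K n a m : a + 3*m <= n ->
  \sum_(C in comps (Gp n a m) (Kset n a)) #|C|./2 <= m.
Proof.
move=> hn.
set Tset := [set Tj n a (val j) | j : 'I_m].
have h : forall C, C \in comps (Gp n a m) (Kset n a) -> #|C|./2 <= (if C \in Tset then 1 else 0).
  move=> C /imsetP [v]; rewrite inE => hv ->; rewrite classE // /Sv.
  case: ifP => hT.
  - have htr : tr a v < m by rewrite /inTr /tr in hT *; lia.
    have -> : (Tj n a (tr a v) :\: Kset n a) \in Tset.
      apply/imsetP; exists (Ordinal htr) => //=; apply/setP=> w; rewrite !inE; apply/idP/idP => [/and3P [_ -> ->] // | /andP [h1 h2]]; rewrite h1 h2 !andbT; move: h1; lia.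
    have := subset_leq_card (subsetDl (Tj n a (tr a v)) (Kset n a)).
    rewrite card_Tj; first exact: half1. rewrite /inTr /tr in hT *; lia.
  - have := subset_leq_card (subsetDl [set v] (Kset n a)). rewrite cards1 => h1; apply: leq_trans (_ : _ <= 0) (leq0n _); exact: half0.
apply: (@leq_trans (\sum_(C in comps (Gp n a m) (Kset n a)) (if C \in Tset then 1 else 0))).
  by apply: leq_sum.
rewrite -big_mkcondr sum1_card.
apply: leq_trans (_ : _ <= #|Tset|) _.
  apply: subset_leq_card; apply/subsetP=> C; rewrite unfold_in => /andP [_ ->] //.
by have := leq_imset_card (fun j : 'I_m => Tj n a (val j)) 'I_m; rewrite card_ord.
Qed.


Lemma ltn_half c k : 2 * k + 2 <= c -> k < c./2. Proof. lia. Qed.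

Lemma maxadm n a m (X : {set 'I_n}) : a + 3*m + 3*(a+m) + 2 <= n ->
  admissible (Gp n a m) (a + m) X -> #|X| <= a.
Proof.
move=> hn; rewrite /admissible.
set S := \sum_(C in comps (Gp n a m) X) #|C|./2 => hadm.
have hXs : #|X| <= a + m by lia.
case: (boolP (Kset n a \subset X)) => hK; last first.
  case/subsetPn: hK => k; rewrite inE => hka hkX.
  set KI := [set w : 'I_n | (w < a) || (a + 3*m <= w)].
  have hKI : #|KI| = n - 3*m.
    have : #|[set w : 'I_n | a <= w < a + 3*m]| = 3*m by rewrite card_range; lia.
    have -> : KI = ~: [set w : 'I_n | a <= w < a + 3*m].
      by apply/setP=> w; rewrite !inE; apply/idP/idP; lia.
    move=> h; have := cardsC [set w : 'I_n | a <= w < a + 3*m]; rewrite card_ord h. lia.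
  set C := [set y | connect (restr (Gp n a m) X) k y].
  have hC : C \in comps (Gp n a m) X by apply: imset_f; rewrite inE.
  have hsub : KI :\: X \subset C.
    apply/subsetP=> w; rewrite !inE => /andP [hwX hw].
    case: (eqVneq k w) => [->|ne]; first exact: connect0.
    apply: connect1; rewrite /restr adjGp ne hkX hwX /= /Pe hka /=. by rewrite hw.
  have h1 := subset_leq_card hsub.
  have h2 : #|KI| - #|X| <= #|KI :\: X|.
    rewrite cardsD; apply: leq_sub2l; exact: subset_leq_card (subsetIr _ _).
  have h3 : #|C|./2 <= S by rewrite /S (bigD1 C hC) /=; exact: leq_addr.
  have : a + m < #|C|./2.
    apply: ltn_half; apply: leq_trans h1; apply: leq_trans h2; rewrite hKI; lia.
  lia.
rewrite leqNgt; apply/negP => hXa.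
have hKc : #|Kset n a| = a by apply: card_K; lia.
have hY : #|X :\: Kset n a| = #|X| - a by rewrite cardsDS // hKc.
set J := [set j : 'I_m | #|Tj n a j :&: X| <= 1].
set Dj := fun j : 'I_m => Tj n a j :\: X.
have hTj : forall j : 'I_m, #|Tj n a j| = 3.
  move=> j; apply: card_Tj; have := ltn_ord j; lia.
have hD2 : forall j, j \in J -> 1 < #|Dj j|.
  move=> j; rewrite inE => hj; rewrite /Dj cardsD hTj; lia.
have hDv : forall j, j \in J -> exists v, v \in Dj j.
  move=> j hj; apply/card_gt0P; have := hD2 j hj; lia.
have hmemT : forall (j : 'I_m) (v : 'I_n), v \in Tj n a j -> inTr a m v && (tr a v == j).
  move=> j v; rewrite inE /inTr /tr => h; have := ltn_ord j; lia.
have hDc : forall j, j \in J -> Dj j \in comps (Gp n a m) X.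
  move=> j hj; have [v hv] := hDv j hj.
  have hvX : v \notin X by move: hv; rewrite inE => /andP [].
  have hvT : v \in Tj n a j by move: hv; rewrite inE => /andP [].
  have /andP [hT /eqP htr] := hmemT j v hvT.
  apply/imsetP; exists v; first by rewrite inE.
  by rewrite classE // /Sv hT htr.
have hinj : {in J &, injective Dj}.
  move=> j1 j2 h1 _ e; have [v hv] := hDv j1 h1.
  have hv2 : v \in Dj j2 by rewrite -e.
  move: hv hv2; rewrite !inE => /andP [_ hv1] /andP [_ hv2].
  apply: val_inj => /=; move: hv1 hv2; lia.
have hsubJ : Dj @: J \subset comps (Gp n a m) X.
  by apply/subsetP=> C /imsetP [j hj ->]; exact: hDc.
have e3 := sum_sub (fun C : {set 'I_n} => #|C|./2) hsubJ.
have e1 : \sum_(C in Dj @: J) #|C|./2 = \sum_(j in J) #|Dj j|./2 := big_imset _ hinj.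
have e2 : #|J| <= \sum_(j in J) #|Dj j|./2.
  rewrite -sum1_card; apply: leq_sum => j hj; have := hD2 j hj; lia.
have hJS : #|J| <= S by apply: leq_trans e2 _; rewrite -e1; exact: e3.
have [y0 hy0] : exists y0, y0 \in X :\: Kset n a by apply/card_gt0P; rewrite hY; lia.
pose f := fun j : 'I_m => odflt y0 [pick w in Tj n a j :&: X].
have hf : forall j, j \in ~: J -> f j \in Tj n a j :&: X.
  move=> j; rewrite !inE -ltnNge => hj. rewrite /f; case: pickP => [w hw|hnone] /=; first by move: hw; rewrite !inE.
  have [w0 hw0] : exists w, w \in Tj n a j :&: X by apply/card_gt0P; exact: ltnW hj.
  by rewrite hnone in hw0.
have hfY : forall j, j \in ~: J -> f j \in X :\: Kset n a.
  move=> j hj; have := hf j hj; rewrite !inE => /andP [h1 h2]; rewrite h2 andbT.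
  have := ltn_ord j; move: h1; lia.
have hfinj : {in ~: J &, injective f}.
  move=> j1 j2 h1 h2 e; have := hf j1 h1; have := hf j2 h2; rewrite e !inE.
  move=> /andP [hv2 _] /andP [hv1 _]; apply: val_inj => /=; move: hv1 hv2; lia.
have hprop : (f @: ~: J) \proper (X :\: Kset n a).
  apply/properP; split.
    by apply/subsetP=> y /imsetP [j hj ->]; exact: hfY.
  case: (set_0Vmem (~: J)) => [e0 | [j0 hj0]].
    by exists y0 => //; rewrite e0 imset0 inE.
  have hj0' : 1 < #|Tj n a j0 :&: X| by move: hj0; rewrite !inE -ltnNge.
  have : ~~ (Tj n a j0 :&: X \subset [set f j0]).
    by apply/negP => /subset_leq_card; rewrite cards1 => /(leq_trans hj0').
  case/subsetPn => y hy hyf. exists y.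
    move: hy; rewrite !inE => /andP [h1 ->]; rewrite andbT.
    have := ltn_ord j0; move: h1; lia.
  apply/imsetP => [[j hj e]].
  have := hf j hj; rewrite -e => hyj.
  have ej : j = j0.
    move: hyj hy; rewrite !inE => /andP [h1 _] /andP [h2 _].
    apply: val_inj => /=; move: h1 h2; lia.
  by move: hyf; rewrite e ej inE eqxx.
have hcJ := proper_card hprop; rewrite card_in_imset // in hcJ.
have hJm : #|J| + #|~: J| = m by rewrite cardsC card_ord.
lia.
Qed.


Lemma noKlt n a m l t : l = a.+1 -> 3 <= l -> l <= t -> a + 3*m <= n ->
  ~~ contains_Klt (Gp n a m) l t.
Proof.
move=> hl h3 hlt hn.
apply/negP => /existsP [A /existsP [B /and4P [/eqP hA /eqP hB hdis /forall_inP hall]]].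
have hAK : A \subset Kset n a.
  apply/subsetP => v hv; rewrite inE; apply: contraT => hvK.
  have hBv : forall w, w \in B -> (v != w) && Pe a m v w.
    by move=> w hw; rewrite -adjGp; exact: (forall_inP (hall v hv) w hw).
  case: (boolP (inTr a m v)) => hT.
  - have hsub : B \subset Tj n a (tr a v) :\ v.
      apply/subsetP=> w hw; have /andP [ne hP] := hBv w hw.
      rewrite !inE eq_sym ne /=; move: hP hT hvK; rewrite /Pe /inTr /tr; lia.
    have := subset_leq_card hsub.
    have hc : #|Tj n a (tr a v)| = 3 by apply: card_Tj; move: hT; rewrite /inTr /tr; lia.
    have hvT : v \in Tj n a (tr a v) by rewrite inE; move: hT; rewrite /inTr /tr; lia.
    move: hc; rewrite (cardsD1 v) hvT add1n => -[->]. rewrite hB; lia.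
  - have hsub : B \subset Kset n a.
      apply/subsetP=> w hw; have /andP [ne hP] := hBv w hw.
      rewrite !inE; move: hP hT hvK; rewrite /Pe /inTr; lia.
    have := subset_leq_card hsub; rewrite hB card_K; lia.
have := subset_leq_card hAK; rewrite hA card_K; lia.
Qed.

Lemma noM n a m : a + 3*m <= n -> ~~ contains_matching (Gp n a m) (a + m).+1.
Proof.
move=> hn.
apply/negP => /existsP [g /andP [/injectiveP ginj /forallP hadj]].
have hP : forall i, (g (i, false) != g (i, true)) && Pe a m (g (i, false)) (g (i, true)).
  by move=> i; rewrite -adjGp.
have hKc : #|Kset n a| = a by apply: card_K; lia.
set P1 := [set i : 'I_(a+m).+1 | (g (i,false) < a) || (g (i,true) < a)].
pose h1 := fun i => if g (i,false) < a then g (i,false) else g (i,true).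
have hc1 : #|P1| <= a.
  have hinj : {in P1 &, injective h1}.
    move=> i i' _ _; rewrite /h1.
    by case: ifP => _; case: ifP => _ e; have := ginj _ _ e; case.
  rewrite -(card_in_imset hinj).
  apply: (@leq_trans #|Kset n a|); last by rewrite hKc.
  apply: subset_leq_card; apply/subsetP => v /imsetP [i]; rewrite !inE /h1 => hi ->.
  by case: ifP => // hf; move: hi; rewrite hf.
pose h2 := fun i => Tj n a (tr a (g (i, false))).
have hmem : forall i b, i \in ~: P1 -> g (i, b) \in h2 i.
  move=> i b; rewrite !inE negb_or => /andP [h1f h1t].
  have /andP [_] := hP i; rewrite /Pe; move: h1f h1t; case: b; set u0 := g (i, false); set u1 := g (i, true); rewrite /tr; lia.
have hreg : forall i, i \in ~: P1 -> a <= g (i, false) < a + 3*m.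
  move=> i; rewrite !inE negb_or => /andP [h1f h1t].
  have /andP [_] := hP i; rewrite /Pe; move: h1f h1t; set u0 := g (i, false); set u1 := g (i, true); lia.
have hc2 : #|~: P1| <= m.
  have hinj : {in ~: P1 &, injective h2}.
    move=> i i' hi hi' e; apply/eqP; apply: contraT => ne.
    pose k := fun pq : bool * bool => g (if pq.1 then i else i', pq.2).
    have kinj : injective k.
      move=> [p q] [p' q'] /ginj /= [e1 ->].
      by case: p p' e1 => [] [] // /eqP; rewrite ?(negbTE ne) // eq_sym (negbTE ne).
    have hsub : k @: setT \subset h2 i.
      apply/subsetP=> v /imsetP [[p q] _ ->]; rewrite /k /=.
      case: p => /=; first exact: hmem.
      rewrite e; exact: hmem.
    have := subset_leq_card hsub; rewrite card_imset // cardsT card_prod card_bool.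
    rewrite /h2 card_Tj //.
    have := hreg i hi; have := hmem i false hi; rewrite inE /tr; set u0 := g (i, false); lia.
  rewrite -(card_in_imset hinj).
  apply: leq_trans (_ : #|[set Tj n a (val j) | j : 'I_m]| <= m); last first.
    by have := leq_imset_card (fun j : 'I_m => Tj n a (val j)) 'I_m; rewrite card_ord.
  apply: subset_leq_card; apply/subsetP=> T /imsetP [i hi ->].
  have := hmem i false hi; rewrite /h2 inE => hh.
  have htr : tr a (g (i, false)) < m.
    have := hreg i hi; rewrite /tr; set u0 := g (i, false); lia.
  by apply/imsetP; exists (Ordinal htr).
have := cardsC P1; rewrite card_ord. lia.
Qed.


Lemma bin2_mul2 p : 'C(p, 2) * 2 = p * p.-1.
Proof.
elim: p => [|p IH] //. rewrite binS bin1 mulnDl IH /=. case: p {IH} => //= p. lia.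
Qed.

Lemma bin2_half c : 'C(c,2) <= 3 * (c./2) * (c./2).
Proof.
have := bin2_mul2 c. have := odd_double_half c. set k := c./2. set b := odd c.
move=> e; rewrite -e -!muln2; case: b e => /= e; nia.
Qed.


Lemma diffC P d : d <= P -> ('C(P,2) - 'C(P-d,2)) * 2 = d * (2*P - d - 1).
Proof.
move=> h. have e1 := bin2_mul2 P. have e2 := bin2_mul2 (P - d).
have l1 : 'C(P-d,2) <= 'C(P,2) by apply: leq_bin2l; lia.
rewrite mulnBl e1 e2.
set Q := P - d. have -> : P = Q + d by lia.
case: Q => [|Q]; case: d {h l1 e1 e2} => [|d] /=; nia.
Qed.

Lemma arith n a m x s : s = a + m -> 2 <= a -> 1 <= x -> x <= a - 1 -> 2 <= m ->
  3*s*(3*s-1) <= n ->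
  'C(n,2) - 'C(n-x,2) + 3*s*s <= 'C(n-3*m,2) - 'C(n-3*m-a,2).
Proof.
move=> hs ha hx1 hxa hm hn.
have hn2 : 9*s*s <= n + 3*s by nia.
have hs2 : 4 <= s by lia.
have hn3 : 8 * s <= n by nia.
rewrite -(leq_pmul2r (_ : 0 < 2)) // mulnDl diffC; last by lia.
rewrite (diffC (P := n - 3*m) (d := a)); last by lia.
have h1 : x * (2*n - x - 1) <= (a-1) * (2*n - 1) by apply: leq_mul; lia.
apply: leq_trans (leq_add h1 (leqnn _)) _.
set N := n - 3*m - a.
have en : n = N + 3*m + a by lia.
have hN : 9*s*s <= N + 3*m + a + 3*s by rewrite -en.
rewrite en hs in hN *.
have -> : N + 3 * m + a - 3 * m = N + a by lia.
clearbody N. subst n. clear hn hn2 hn3 hs.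
case: a ha hxa h1 hN => [|b] // ha hxa h1 hN.
have -> : b.+1 - 1 = b by lia.
have -> : 2 * (N + 3 * m + b.+1) - 1 = 2*N + 6*m + 2*b + 1 by lia.
have -> : 2 * (N + b.+1) - b.+1 - 1 = 2*N + b by lia.
have hN' : 9 * ((b.+1 + m) * (b.+1 + m)) <= N + 3 * m + b.+1 + 3 * (b.+1 + m) by move: hN; rewrite -!mulnA.
nia.
Qed.


Lemma edges_Gp n a m : a + 3*m <= n ->
  'C(n - 3*m, 2) - 'C(n - 3*m - a, 2) <= #|Gp n a m|.
Proof.
move=> hn.
set KI := [set w : 'I_n | (w < a) || (a + 3*m <= w)].
set Is := [set w : 'I_n | a + 3*m <= w < n].
have hKI : #|KI| = n - 3*m.
  have : #|[set w : 'I_n | a <= w < a + 3*m]| = 3*m by rewrite card_range; lia.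
  have -> : KI = ~: [set w : 'I_n | a <= w < a + 3*m].
    by apply/setP=> w; rewrite !inE; apply/idP/idP; lia.
  move=> h; have := cardsC [set w : 'I_n | a <= w < a + 3*m]; rewrite card_ord h. lia.
have hIs : #|Is| = n - 3*m - a by rewrite card_range //; lia.
have hsub : D2 Is \subset D2 KI.
  apply/subsetP=> e; rewrite !inE => /andP [hs ->]; rewrite andbT.
  apply: subset_trans hs _; apply/subsetP=> w; rewrite !inE; lia.
have hsub2 : D2 KI :\: D2 Is \subset Gp n a m.
  apply/subsetP=> e; rewrite !inE => /andP [hn1 /andP [hs hc]].
  rewrite hc andbT in hn1.
  case/cards2P: hc => u [v [ne he]].
  apply/existsP; exists u; apply/existsP; exists v; rewrite ne he eqxx andbT /=.
  have hu : u \in KI by apply: (subsetP hs); rewrite he !inE eqxx.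
  have hv : v \in KI by apply: (subsetP hs); rewrite he !inE eqxx orbT.
  case/subsetPn: hn1 => w hw hwI.
  rewrite he !inE in hw; rewrite !inE in hu hv hwI.
  have := ltn_ord w; have := ltn_ord u; have := ltn_ord v.
  case/orP: hw => /eqP ew; subst w; rewrite /Pe; lia.
apply: leq_trans (subset_leq_card hsub2).
by rewrite cardsDS // /D2 !cards_draws hKI hIs.
Qed.


Lemma sumC2 n (E : graph n) (X : {set 'I_n}) s : admissible E s X ->
  \sum_(C in comps E X) 'C(#|C|,2) <= 3*s*s.
Proof.
rewrite /admissible. set S := \sum_(C in comps E X) #|C|./2 => h.
have hS : S <= s by apply: leq_trans h; exact: leq_addl.
apply: (@leq_trans (\sum_(C in comps E X) 3*S*(#|C|./2))).
  apply: leq_sum => C hC. apply: leq_trans (bin2_half _) _.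
  have hk : #|C|./2 <= S by rewrite /S (bigD1 C hC) /=; exact: leq_addr.
  by apply: leq_mul => //; apply: leq_mul.
rewrite -big_distrr /=. by apply: leq_mul => //; apply: leq_mul.
Qed.

Theorem lemma3p1 (l t s n : nat) :
  l <= t -> 3 <= l.+1 -> l.+1 <= s -> 2 * 'C(3 * s, 2) <= n ->
  forall x : nat, 1 <= x -> x <= l - 1 ->
  ex_x n l t s x <= ex_x n l t s (l - 1).
Proof.
move=> hlt h3 hls hn x hx1 hxl.
case: (eqVneq x (l - 1)) => [-> //|hne].
set a := l - 1. set m := s - a.
have hl : l = a.+1 by rewrite /a; lia.
have hs : s = a + m by rewrite /m /a; lia.
have hn' : 3*s*(3*s-1) <= n.
  move: hn; rewrite mulnC bin2_mul2. by case: (3*s) => [|q] //=; rewrite subn1.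
have hbig : a + 3*m + 3*(a+m) + 2 <= n by nia.
have hG : in_Gx l t s (l - 1) (Gp n a m).
  have hK : ~~ contains_Klt (Gp n a m) l t by apply: noKlt => //; lia.
  have hM : ~~ contains_matching (Gp n a m) s.+1 by rewrite hs; apply: noM; lia.
  rewrite /in_Gx simpleGp /KM_free hK hM /=.
  rewrite hs.
  rewrite /has_x; apply/andP; split.
    apply/existsP; exists (Kset n a); rewrite card_K; last by lia.
    rewrite eqxx andbT /admissible card_K; last by lia.
    rewrite leq_add2l; apply: sum_K; lia.
  apply/forallP => X; apply/implyP => hX; exact: maxadm hbig hX.
rewrite /ex_x; apply/bigmax_leqP => E hE.
apply: leq_trans (leq_bigmax_cond _ hG).
case/and3P: hE => hsim _ /andP [/existsP [X /andP [hadm /eqP hX]] _].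
rewrite /nedges.
apply: leq_trans (edge_bound X hsim) _.
rewrite hX.
apply: leq_trans (leq_add (leqnn _) (sumC2 hadm)) _.
apply: leq_trans (edges_Gp _); last by lia.
apply: arith => //; lia.
Qed.
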